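(* Let $(x_n)$ be a level-block sequence in $JT$ which is equivalent to the unit vector basis of $\ell_2$. Then the closed linear span $[x_n]$ is complemented in $JT$.
   Context: Let $\mathcal T$ be the dyadic tree, with nodes enumerated by $\mathbb N$ so that the tree order $\preceq$ satisfies $n\preceq m\Rightarrow n\le m$; $|t|$ is the height of node $t$. A segment is a subset $s\subseteq\mathcal T$ totally ordered by $\preceq$ and convex. For $x\in c_0(\mathcal T)$, $\|x\|_{JT}=\sup\big(\sum_{j=1}^k(\sum_{t\in s_j}x(t))^2\big)^{1/2}$ over all finite families of pairwise disjoint finite segments; $JT=\{x\in c_0:\|x\|_{JT}<\infty\}$. For $0\ne x\in JT$, $\operatorname{supp}x=\{t:x(t)\ne0\}$, $l(x)=\min\{|t|:t\in\operatorname{supp}x\}$, $u(x)=\sup\{|t|:t\in\operatorname{supp}x\}$. A sequence $(x_k)$ of nonzero vectors is level-block if $u(x_k)<l(x_{k+1})$ for all $k$. *)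

(* Defs.v *)
From Stdlib Require Import Reals List Arith.
From Coquelicot Require Import Coquelicot.
Open Scope R_scope.

(* ---------- The dyadic tree, nodes enumerated by nat ----------
   Root 0; the children of node n are 2n+1 and 2n+2.
   Hence the parent of m >= 1 is (m-1)/2, and n ⪯ m implies n <= m. *)
Definition parent (m : nat) : nat := Nat.div (m - 1) 2.

Definition tree_le (n m : nat) : Prop := exists k : nat, Nat.iter k parent m = n.

(* height |t| : nodes of height k are 2^k-1, ..., 2^(k+1)-2 *)
Definition height (t : nat) : nat := Nat.log2 (S t).

Definition finite_segment (s : list nat) : Prop :=
  NoDup s /\
  (forall a b, In a s -> In b s -> tree_le a b \/ tree_le b a) /\
  (forall a b c, In a s -> In c s -> tree_le a b -> tree_le b c -> In b s).

Definition admissible_family (F : list (list nat)) : Prop :=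
  (forall s, In s F -> finite_segment s) /\
  ForallOrdPairs (fun s1 s2 => forall t, In t s1 -> ~ In t s2) F.

Definition seg_sum (x : nat -> R) (s : list nat) : R :=
  fold_right (fun t acc => x t + acc) 0 s.

Definition fam_val (x : nat -> R) (F : list (list nat)) : R :=
  fold_right (fun s acc => (seg_sum x s) ^ 2 + acc) 0 F.

Definition jt_sq_norm (x : nat -> R) : Rbar :=
  Lub_Rbar (fun r => exists F, admissible_family F /\ r = fam_val x F).

Definition jt_norm (x : nat -> R) : R := sqrt (real (jt_sq_norm x)).

Definition in_c0 (x : nat -> R) : Prop := is_lim_seq x 0.

Definition in_JT (x : nat -> R) : Prop := in_c0 x /\ is_finite (jt_sq_norm x).

Definition nonzero (x : nat -> R) : Prop := exists t, x t <> 0.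

Definition level_before (x y : nat -> R) : Prop :=
  exists h : nat,
    (forall t, x t <> 0 -> (height t <= h)%nat) /\
    (forall t, y t <> 0 -> (h < height t)%nat).

Definition level_block (xs : nat -> nat -> R) : Prop :=
  (forall k, nonzero (xs k)) /\ (forall k, level_before (xs k) (xs (S k))).

Fixpoint lcomb (a : nat -> R) (xs : nat -> nat -> R) (n : nat) (t : nat) : R :=
  match n with
  | O => 0
  | S n' => lcomb a xs n' t + a n' * xs n' t
  end.

Fixpoint sumsq (a : nat -> R) (n : nat) : R :=
  match n with
  | O => 0
  | S n' => sumsq a n' + a n' ^ 2
  end.

Definition equiv_l2_basis (xs : nat -> nat -> R) : Prop :=
  exists c C : R, 0 < c /\ 0 < C /\
    forall (n : nat) (a : nat -> R),
      c * sqrt (sumsq a n) <= jt_norm (lcomb a xs n) /\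
      jt_norm (lcomb a xs n) <= C * sqrt (sumsq a n).

Definition in_closed_span (xs : nat -> nat -> R) (y : nat -> R) : Prop :=
  in_JT y /\
  forall eps : R, 0 < eps ->
    exists (n : nat) (a : nat -> R),
      jt_norm (fun t => y t - lcomb a xs n t) < eps.

Definition complemented_in_JT (Y : (nat -> R) -> Prop) : Prop :=
  exists (P : (nat -> R) -> (nat -> R)) (K : R),
    (forall x, in_JT x -> in_JT (P x)) /\
    (forall x y a b, in_JT x -> in_JT y ->
       forall t, P (fun s => a * x s + b * y s) t = a * P x t + b * P y t) /\
    (forall x, in_JT x -> jt_norm (P x) <= K * jt_norm x) /\
    (forall x, in_JT x -> Y (P x)) /\
    (forall y, Y y -> forall t, P y t = y t).

(* Main.v *)
Require Import Defs.
From Stdlib Require Import Reals.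
From Coquelicot Require Import Coquelicot.
From Stdlib Require Import Lra Lia List Arith Classical FunctionalExtensionality ClassicalEpsilon.
Open Scope R_scope.

Lemma seg_sum_ext u v s : (forall t, In t s -> u t = v t) -> seg_sum u s = seg_sum v s.
Proof.
  induction s as [|a s IH]; intros H; simpl; auto.
  rewrite H by (simpl; auto). rewrite IH; auto. intros t Ht; apply H; simpl; auto.
Qed.

Lemma fam_val_ext u v F : (forall s t, In s F -> In t s -> u t = v t) -> fam_val u F = fam_val v F.
Proof.
  induction F as [|a F IH]; intros H; simpl; auto.
  rewrite (seg_sum_ext u v a) by (intros; eapply H; simpl; eauto).
  rewrite IH; auto. intros s t Hs Ht; eapply H; simpl; eauto.
Qed.

Lemma fam_val_app u F1 F2 : fam_val u (F1 ++ F2) = fam_val u F1 + fam_val u F2.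
Proof. induction F1; simpl; [lra|]. rewrite IHF1; lra. Qed.

Lemma fam_val_nonneg u F : 0 <= fam_val u F.
Proof. induction F; simpl; [lra|]. nra. Qed.

Lemma seg_sum_lin a b u v s :
  seg_sum (fun t => a * u t + b * v t) s = a * seg_sum u s + b * seg_sum v s.
Proof. induction s; simpl; [lra|]. rewrite IHs; lra. Qed.

Lemma seg_sum_zero u s : (forall t, In t s -> u t = 0) -> seg_sum u s = 0.
Proof. induction s; simpl; intros H; auto. rewrite H, IHs; auto; lra. Qed.

Lemma adm_nil : admissible_family nil.
Proof. split; [intros s []|constructor]. Qed.

Lemma jt_fin_bound u M :
  (forall F, admissible_family F -> fam_val u F <= M) ->
  is_finite (jt_sq_norm u) /\ real (jt_sq_norm u) <= M.
Proof.
  intros H. unfold jt_sq_norm.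
  destruct (Lub_Rbar_correct (fun r => exists F, admissible_family F /\ r = fam_val u F)) as [Hub Hl].
  assert (H0 : Rbar_le 0 (Lub_Rbar (fun r => exists F, admissible_family F /\ r = fam_val u F))).
  { apply Hub. exists nil. split; [apply adm_nil|reflexivity]. }
  assert (H1 : Rbar_le (Lub_Rbar (fun r => exists F, admissible_family F /\ r = fam_val u F)) M).
  { apply Hl. intros r [F [HF ->]]. simpl. apply H; auto. }
  destruct (Lub_Rbar _); simpl in *; try contradiction. split; [reflexivity|auto].
Qed.

Lemma jt_le u F : is_finite (jt_sq_norm u) -> admissible_family F -> fam_val u F <= real (jt_sq_norm u).
Proof.
  intros Hf HF. unfold jt_sq_norm in *.
  destruct (Lub_Rbar_correct (fun r => exists F, admissible_family F /\ r = fam_val u F)) as [Hub Hl].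
  assert (Rbar_le (fam_val u F) (Lub_Rbar (fun r => exists F, admissible_family F /\ r = fam_val u F))).
  { apply Hub. eauto. }
  rewrite <- Hf in H. simpl in H. exact H.
Qed.

Lemma jt_real_nonneg u : 0 <= real (jt_sq_norm u).
Proof.
  unfold jt_sq_norm.
  destruct (Lub_Rbar_correct (fun r => exists F, admissible_family F /\ r = fam_val u F)) as [Hub Hl].
  assert (H0 : Rbar_le 0 (Lub_Rbar (fun r => exists F, admissible_family F /\ r = fam_val u F))).
  { apply Hub. exists nil. split; [apply adm_nil|reflexivity]. }
  destruct (Lub_Rbar _); simpl in *; lra.
Qed.

Lemma jt_norm_sq u : jt_norm u ^ 2 = real (jt_sq_norm u).
Proof. unfold jt_norm. apply pow2_sqrt, jt_real_nonneg. Qed.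

Lemma jt_norm_nonneg u : 0 <= jt_norm u.
Proof. apply sqrt_pos. Qed.

Lemma parent_le m : (parent m <= m)%nat.
Proof. unfold parent. apply Nat.Div0.div_le_upper_bound. lia. Qed.

Lemma iter_parent_le k m : (Nat.iter k parent m <= m)%nat.
Proof. induction k; simpl; [lia|]. eapply Nat.le_trans; [apply parent_le|auto]. Qed.

Lemma tree_le_le a b : tree_le a b -> (a <= b)%nat.
Proof. intros [k <-]. apply iter_parent_le. Qed.

Lemma tree_le_height a b : tree_le a b -> (height a <= height b)%nat.
Proof. intros H. apply tree_le_le in H. unfold height. apply Nat.log2_le_mono. lia. Qed.

Lemma tree_le_refl a : tree_le a a.
Proof. exists 0%nat. reflexivity. Qed.

Lemma singleton_seg t : finite_segment (t :: nil).
Proof.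
  split; [constructor; [intros []|constructor]|split].
  - intros a b [<-|[]] [<-|[]]. left; apply tree_le_refl.
  - intros a b c [<-|[]] [<-|[]] H1 H2. apply tree_le_le in H1, H2. left; lia.
Qed.

Lemma adm_single t : admissible_family ((t :: nil) :: nil).
Proof. split. intros s [<-|[]]. apply singleton_seg. constructor; constructor. Qed.

Lemma abs_le_norm u t : is_finite (jt_sq_norm u) -> Rabs (u t) <= jt_norm u.
Proof.
  intros Hf. pose proof (jt_le u _ Hf (adm_single t)) as H. simpl in H.
  unfold jt_norm. rewrite <- sqrt_Rsqr_abs. apply sqrt_le_1_alt. unfold Rsqr. lra.
Qed.

Lemma fop_map {A B} (R1 : A -> A -> Prop) (R2 : B -> B -> Prop) (f : A -> B) l :
  (forall a b, In a l -> In b l -> R1 a b -> R2 (f a) (f b)) ->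
  ForallOrdPairs R1 l -> ForallOrdPairs R2 (map f l).
Proof.
  intros H Hl. induction Hl as [|a l Ha Hl IH]; simpl; constructor.
  - rewrite Forall_forall in *. intros y Hy. apply in_map_iff in Hy as [b [<- Hb]].
    apply H; simpl; auto.
  - apply IH. intros; apply H; simpl; auto.
Qed.

Lemma fop_app {A} (R : A -> A -> Prop) l1 l2 :
  ForallOrdPairs R l1 -> ForallOrdPairs R l2 ->
  (forall a b, In a l1 -> In b l2 -> R a b) -> ForallOrdPairs R (l1 ++ l2).
Proof.
  intros H1 H2 H. induction H1 as [|a l Ha Hl IH]; simpl; auto. constructor.
  - apply Forall_app; split; auto. rewrite Forall_forall. intros; apply H; simpl; auto.
  - apply IH. intros; apply H; simpl; auto.
Qed.

Lemma nodup_fop l : NoDup l -> ForallOrdPairs (fun s1 s2 : list nat => forall t, In t s1 -> ~ In t s2) (map (fun t => t :: nil) l).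
Proof.
  induction 1; simpl; constructor; auto.
  rewrite Forall_forall. intros y Hy. apply in_map_iff in Hy as [b [<- Hb]].
  intros t [<-|[]] [->|[]]. contradiction.
Qed.

Lemma fam_val_singles u l : fam_val u (map (fun t => t :: nil) l) = fold_right (fun t acc => u t ^ 2 + acc) 0 l.
Proof. induction l; simpl; auto. rewrite IHl. f_equal. ring. Qed.

Lemma finite_c0 u : is_finite (jt_sq_norm u) -> in_c0 u.
Proof.
  intros Hf. unfold in_c0. apply is_lim_seq_spec. intros eps.
  apply NNPP. intros Hne.
  assert (Hinf : forall N, exists n, (N <= n)%nat /\ eps <= Rabs (u n)).
  { intros N. apply NNPP. intros Hn. apply Hne. exists N. intros n Hn'.
    rewrite Rminus_0_r. apply Rnot_le_lt. intros Hc. apply Hn. eauto. }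
  assert (Hl : forall K, exists l, length l = K /\ NoDup l /\ forall t, In t l -> eps <= Rabs (u t)).
  { induction K as [|K [l [Hlen [Hnd Hall]]]].
    - exists nil. repeat split; auto. constructor. intros t [].
    - destruct (Hinf (S (list_max l))) as [n [Hn Hu]].
      exists (n :: l). repeat split; simpl; auto.
      + constructor; auto. intros Hin.
        assert (Hm : (list_max l <= list_max l)%nat) by lia.
        apply list_max_le in Hm. rewrite Forall_forall in Hm. apply Hm in Hin. lia.
      + intros t [<-|Ht]; auto. }
  pose proof (cond_pos eps) as Heps.
  destruct (INR_archimed (eps^2) (real (jt_sq_norm u))) as [K HK]. { nra. }
  destruct (Hl K) as [l [Hlen [Hnd Hall]]].
  assert (Hadm : admissible_family (map (fun t => t :: nil) l)).
  { split. intros s Hs. apply in_map_iff in Hs as [t [<- _]]. apply singleton_seg.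
    apply nodup_fop; auto. }
  pose proof (jt_le u _ Hf Hadm) as Hle. rewrite fam_val_singles in Hle.
  assert (INR (length l) * eps^2 <= fold_right (fun t acc => u t ^ 2 + acc) 0 l).
  { clear -Hall Heps. induction l; [simpl; lra|].
    change (length (a :: l)) with (S (length l)). rewrite S_INR. cbn [fold_right]. assert (eps <= Rabs (u a)) by (apply Hall; simpl; auto).
    assert (eps^2 <= u a ^2). { rewrite <- (pow2_abs (u a)). nra. }
    assert (INR (length l) * eps ^ 2 <= fold_right (fun t acc => u t ^ 2 + acc) 0 l).
    { apply IHl. intros; apply Hall; simpl; auto. }
    rewrite Rmult_plus_distr_r; lra. }
  rewrite Hlen in H. lra.
Qed.

Lemma finite_comb u v a b : is_finite (jt_sq_norm u) -> is_finite (jt_sq_norm v) ->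
  is_finite (jt_sq_norm (fun t => a * u t + b * v t)).
Proof.
  intros Hu Hv.
  apply (jt_fin_bound _ (2 * a^2 * real (jt_sq_norm u) + 2 * b^2 * real (jt_sq_norm v))).
  intros F HF. pose proof (jt_le u F Hu HF). pose proof (jt_le v F Hv HF).
  assert (fam_val (fun t => a * u t + b * v t) F <= 2 * a^2 * fam_val u F + 2 * b^2 * fam_val v F).
  { clear. induction F; simpl; [lra|]. rewrite seg_sum_lin.
    set (p := seg_sum u a0). set (q := seg_sum v a0).
    assert (0 <= (a*p - b*q)^2) by apply pow2_ge_0. nra. }
  assert (0 <= a^2) by nra. assert (0 <= b^2) by nra. nra.
Qed.

Lemma finite_zero : is_finite (jt_sq_norm (fun _ => 0)).
Proof.
  apply (jt_fin_bound _ 0). intros F _. induction F; simpl; [lra|].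
  rewrite seg_sum_zero by auto. lra.
Qed.

Lemma filter_seg (p : nat -> bool) lo hi s :
  (forall t, p t = andb (Nat.leb lo (height t)) (Nat.leb (height t) hi)) ->
  finite_segment s -> finite_segment (filter p s).
Proof.
  intros Hp [Hnd [Hch Hcv]]. split; [|split].
  - apply NoDup_filter; auto.
  - intros a b Ha Hb. apply filter_In in Ha, Hb. apply Hch; tauto.
  - intros a b c Ha Hc H1 H2. apply filter_In in Ha as [Ha Pa]. apply filter_In in Hc as [Hc Pc].
    apply filter_In. split. exact (Hcv a b c Ha Hc H1 H2).
    rewrite Hp in *. apply andb_prop in Pa, Pc. destruct Pa as [A1 A2], Pc as [C1 C2].
    apply Nat.leb_le in A1, A2, C1, C2. apply tree_le_height in H1, H2.
    apply andb_true_intro; split; apply Nat.leb_le; lia.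
Qed.

Lemma filter_adm (p : nat -> bool) lo hi F :
  (forall t, p t = andb (Nat.leb lo (height t)) (Nat.leb (height t) hi)) ->
  admissible_family F -> admissible_family (map (filter p) F).
Proof.
  intros Hp [H1 H2]. split.
  - intros s Hs. apply in_map_iff in Hs as [s0 [<- Hs0]]. eapply filter_seg; eauto.
  - eapply fop_map; [|exact H2]. intros a b _ _ H t Ht Ht'.
    apply filter_In in Ht as [Ht _]. apply filter_In in Ht' as [Ht' _]. exact (H t Ht Ht').
Qed.

Lemma seg_sum_filter (p : nat -> bool) u s :
  (forall t, In t s -> p t = false -> u t = 0) -> seg_sum u (filter p s) = seg_sum u s.
Proof.
  induction s as [|a s IH]; intros H; simpl; auto.
  destruct (p a) eqn:E; simpl.
  - rewrite IH; auto. intros; apply H; simpl; auto.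
  - rewrite H by (simpl; auto). rewrite IH; [lra|]. intros; apply H; simpl; auto.
Qed.

Lemma fam_val_filter (p : nat -> bool) u F :
  (forall t, p t = false -> u t = 0) -> fam_val u (map (filter p) F) = fam_val u F.
Proof.
  intros H. induction F; simpl; auto. rewrite IHF, seg_sum_filter; auto.
Qed.

Lemma exists_height_bound (F : list (list nat)) : exists M, forall s t, In s F -> In t s -> (S (height t) <= M)%nat.
Proof.
  induction F as [|s F [M HM]].
  - exists 0%nat. intros s t [].
  - assert (exists M', forall t, In t s -> (S (height t) <= M')%nat) as [M' HM'].
    { clear. induction s as [|a s [M HM]]. exists 0%nat; intros t [].
      exists (Nat.max M (S (height a))). intros t [<-|Ht]; [lia|]. specialize (HM t Ht); lia. }
    exists (Nat.max M M'). intros s0 t [<-|Hs] Ht. specialize (HM' t Ht); lia. specialize (HM s0 t Hs Ht); lia.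
Qed.

Lemma lcomb_coef_ext a b xs n t : (forall k, a k = b k) -> lcomb a xs n t = lcomb b xs n t.
Proof. intros H. induction n; simpl; auto. rewrite IHn, H; auto. Qed.

Lemma lcomb_lin p q a b xs n t :
  lcomb (fun k => p * a k + q * b k) xs n t = p * lcomb a xs n t + q * lcomb b xs n t.
Proof. induction n; simpl; [lra|]. rewrite IHn; ring. Qed.

Definition trh (n : nat) (a : nat -> R) k := if (k <? n)%nat then 0 else a k.
Definition trl (n : nat) (a : nat -> R) k := if (k <? n)%nat then a k else 0.

Lemma lcomb_split a xs n M t :
  lcomb a xs M t = lcomb a xs (Nat.min n M) t + lcomb (trh n a) xs M t.
Proof.
  induction M; simpl.
  - rewrite Nat.min_0_r; simpl; lra.
  - unfold trh at 2. destruct (Nat.ltb_spec M n).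
    + rewrite Nat.min_r by lia. replace (Nat.min n M) with M in IHM by lia. simpl. lra.
    + rewrite Nat.min_l by lia. rewrite Nat.min_l in IHM by lia. lra.
Qed.

Lemma lcomb_low a xs n M t : lcomb (trl n a) xs M t = lcomb a xs (Nat.min n M) t.
Proof.
  induction M; simpl.
  - rewrite Nat.min_0_r; reflexivity.
  - unfold trl at 2. destruct (Nat.ltb_spec M n).
    + rewrite Nat.min_r by lia. rewrite Nat.min_r in IHM by lia. simpl. lra.
    + rewrite Nat.min_l by lia. rewrite Nat.min_l in IHM by lia. lra.
Qed.

Lemma sumsq_split a n M : sumsq a M = sumsq a (Nat.min n M) + sumsq (trh n a) M.
Proof.
  induction M; cbn [sumsq].
  - rewrite Nat.min_0_r; cbn [sumsq]; lra.
  - replace (trh n a M) with (if (M <? n)%nat then 0 else a M) by reflexivity.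
    destruct (Nat.ltb_spec M n).
    + rewrite Nat.min_r by lia. replace (Nat.min n M) with M in IHM by lia. cbn [sumsq]. nra.
    + rewrite Nat.min_l by lia. rewrite Nat.min_l in IHM by lia. lra.
Qed.

Lemma sumsq_nonneg a n : 0 <= sumsq a n.
Proof. induction n; simpl; [lra|]. pose proof (pow2_ge_0 (a n)). lra. Qed.

Lemma lcomb_stable a xs t M : (forall k, (M <= k)%nat -> xs k t = 0) ->
  forall M', (M <= M')%nat -> lcomb a xs M' t = lcomb a xs M t.
Proof.
  intros H M' HM. induction HM; auto. simpl. rewrite H by lia. rewrite IHHM. lra.
Qed.

Lemma lcomb_finite a xs n : (forall k, is_finite (jt_sq_norm (xs k))) -> is_finite (jt_sq_norm (lcomb a xs n)).
Proof.
  intros H. induction n.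
  - change (is_finite (jt_sq_norm (fun _ : nat => 0))). apply finite_zero.
  - assert (E : lcomb a xs (S n) = fun t => 1 * lcomb a xs n t + a n * xs n t).
    { extensionality t. simpl. ring. }
    rewrite E. apply finite_comb; auto.
Qed.

Section Main.
Variable xs : nat -> nat -> R.
Hypothesis Hjt : forall k, in_JT (xs k).
Hypothesis Hlb : level_block xs.
Variables c C : R.
Hypothesis Hc : 0 < c.
Hypothesis HC : 0 < C.
Hypothesis Heq : forall n a, c * sqrt (sumsq a n) <= jt_norm (lcomb a xs n) /\
                             jt_norm (lcomb a xs n) <= C * sqrt (sumsq a n).

Lemma xs_fin k : is_finite (jt_sq_norm (xs k)).
Proof. apply Hjt. Qed.

Definition hb n : nat := proj1_sig (constructive_indefinite_description _ (proj2 Hlb n)).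

Lemma hb_spec n : (forall t, xs n t <> 0 -> (height t <= hb n)%nat) /\
                  (forall t, xs (S n) t <> 0 -> (hb n < height t)%nat).
Proof. unfold hb. destruct (constructive_indefinite_description _ _) as [h Hh]. exact Hh. Qed.

Definition lo n : nat := match n with O => O | S k => S (hb k) end.

Lemma band_of n t : xs n t <> 0 -> (lo n <= height t <= hb n)%nat.
Proof.
  intros H. split; [|apply hb_spec; auto].
  destruct n; simpl; [lia|]. apply (proj2 (hb_spec n)) in H. lia.
Qed.

Lemma lo_le_hb n : (lo n <= hb n)%nat.
Proof. destruct (proj1 Hlb n) as [t Ht]. apply band_of in Ht. lia. Qed.

Lemma hb_le m n : (m <= n)%nat -> (hb m <= hb n)%nat.
Proof.
  induction 1; auto. pose proof (lo_le_hb (S m0)). simpl in H0. lia.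
Qed.

Lemma hb_lt_lo m n : (m < n)%nat -> (hb m < lo n)%nat.
Proof. intros H. destruct n; [lia|]. simpl. pose proof (hb_le m n). lia. Qed.

Lemma n_le_lo n : (n <= lo n)%nat.
Proof. induction n; simpl; [lia|]. pose proof (lo_le_hb n). lia. Qed.

Lemma xs_zero_high k t : (height t < k)%nat -> xs k t = 0.
Proof.
  intros H. destruct (Req_dec (xs k t) 0); auto. apply band_of in H0.
  pose proof (n_le_lo k). lia.
Qed.

Lemma band_unique n k t : (lo n <= height t <= hb n)%nat -> xs k t <> 0 -> k = n.
Proof.
  intros Hb Hk. apply band_of in Hk.
  destruct (Nat.lt_trichotomy k n) as [H|[H|H]]; auto.
  - apply hb_lt_lo in H. lia.
  - apply hb_lt_lo in H. lia.
Qed.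

Definition e1 (n : nat) k := if Nat.eqb k n then 1 else 0.

Lemma norm_xs n : c <= jt_norm (xs n).
Proof.
  destruct (Heq (S n) (e1 n)) as [H _].
  assert (Hs : sumsq (e1 n) (S n) = 1).
  { simpl. assert (forall m, (m <= n)%nat -> sumsq (e1 n) m = 0).
    { induction m; simpl; auto. intros Hm. rewrite IHm by lia. unfold e1.
      replace (Nat.eqb m n) with false by (symmetry; apply Nat.eqb_neq; lia). ring. }
    rewrite H0 by lia. unfold e1. rewrite Nat.eqb_refl. ring. }
  assert (Hl : lcomb (e1 n) xs (S n) = xs n).
  { extensionality t. simpl.
    assert (forall m, (m <= n)%nat -> lcomb (e1 n) xs m t = 0).
    { induction m; simpl; auto. intros Hm. rewrite IHm by lia. unfold e1.
      replace (Nat.eqb m n) with false by (symmetry; apply Nat.eqb_neq; lia). ring. }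
    rewrite H0 by lia. unfold e1. rewrite Nat.eqb_refl. ring. }
  rewrite Hs, Hl, sqrt_1 in H. lra.
Qed.

Definition bandb n t := andb (Nat.leb (lo n) (height t)) (Nat.leb (height t) (hb n)).

Lemma bandb_true n t : bandb n t = true -> (lo n <= height t <= hb n)%nat.
Proof. unfold bandb. intros H. apply andb_prop in H as [H1 H2]. apply Nat.leb_le in H1, H2. lia. Qed.

Lemma G_exists n : exists G, admissible_family G /\
  (forall s t, In s G -> In t s -> bandb n t = true) /\ c^2/2 < fam_val (xs n) G.
Proof.
  assert (Hr : c^2 <= real (jt_sq_norm (xs n))).
  { rewrite <- jt_norm_sq. pose proof (norm_xs n). nra. }
  assert (HF : exists F, admissible_family F /\ c^2/2 < fam_val (xs n) F).
  { apply NNPP. intros Hn.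
    destruct (jt_fin_bound (xs n) (c^2/2)) as [_ Hb].
    { intros F HF. apply Rnot_lt_le. intros Hl. apply Hn. eauto. }
    nra. }
  destruct HF as [F [HF Hv]].
  exists (map (filter (bandb n)) F). split; [|split].
  - eapply filter_adm; [|exact HF]. intros t; reflexivity.
  - intros s t Hs Ht. apply in_map_iff in Hs as [s0 [<- _]]. apply filter_In in Ht. tauto.
  - rewrite fam_val_filter; auto. intros t Hb.
    destruct (Req_dec (xs n t) 0); auto. apply band_of in H.
    unfold bandb in Hb. destruct H as [H1 H2]. apply Nat.leb_le in H1, H2. rewrite H1, H2 in Hb. discriminate.
Qed.

Definition G n := proj1_sig (constructive_indefinite_description _ (G_exists n)).

Lemma G_spec n : admissible_family (G n) /\
  (forall s t, In s (G n) -> In t s -> bandb n t = true) /\ c^2/2 < fam_val (xs n) (G n).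
Proof. unfold G. destruct (constructive_indefinite_description _ _) as [g Hg]. exact Hg. Qed.

Definition famdot (u v : nat -> R) (F : list (list nat)) : R :=
  fold_right (fun s acc => seg_sum u s * seg_sum v s + acc) 0 F.

Definition fv n := fam_val (xs n) (G n).

Lemma fv_pos n : c^2/2 < fv n.
Proof. apply G_spec. Qed.

Definition f n (y : nat -> R) := famdot (xs n) y (G n) / fv n.

Lemma famdot_lin u v w a b F :
  famdot u (fun t => a * v t + b * w t) F = a * famdot u v F + b * famdot u w F.
Proof. induction F; simpl; [lra|]. rewrite seg_sum_lin, IHF. ring. Qed.

Lemma f_lin n a b v w : f n (fun t => a * v t + b * w t) = a * f n v + b * f n w.
Proof. unfold f. rewrite famdot_lin. pose proof (fv_pos n). field. nra. Qed.

Lemma cs_aux u v F l : 0 <= fam_val v F - 2 * l * famdot u v F + l^2 * fam_val u F.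
Proof.
  induction F; simpl; [lra|].
  pose proof (pow2_ge_0 (seg_sum v a - l * seg_sum u a)). nra.
Qed.

Lemma f_sq n y : f n y ^ 2 <= (2 / c^2) * fam_val y (G n).
Proof.
  pose proof (fv_pos n) as Hp. pose proof (cs_aux (xs n) y (G n) (f n y)) as H.
  assert (Hd : famdot (xs n) y (G n) = f n y * fv n).
  { unfold f. field. pose proof (pow2_ge_0 c). lra. }
  rewrite Hd in H. fold (fv n) in H.
  set (q := f n y) in *. set (A := fv n) in *. set (B := fam_val y (G n)) in *.
  assert (Hc2 : 0 < c^2) by nra.
  assert (H1 : q^2 * A <= B) by nra.
  assert (H2 : q^2 * (c^2/2) <= B). { pose proof (pow2_ge_0 q). nra. }
  replace (2 / c^2 * B) with (B / (c^2/2)) by (field; lra).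
  apply (Rmult_le_reg_r (c^2/2)); [lra|]. replace (B / (c^2/2) * (c^2/2)) with B by (field; lra). lra.
Qed.


Lemma famdot_self u F : famdot u u F = fam_val u F.
Proof. induction F; simpl; auto. rewrite IHF. ring. Qed.

Lemma famdot_zero u v F : (forall s t, In s F -> In t s -> v t = 0) -> famdot u v F = 0.
Proof.
  induction F; simpl; intros H; auto.
  rewrite (seg_sum_zero v a) by (intros; eapply H; simpl; eauto).
  rewrite IHF; [ring|]. intros; eapply H; simpl; eauto.
Qed.

Lemma f_xs n j : f n (xs j) = if Nat.eqb j n then 1 else 0.
Proof.
  destruct (Nat.eqb_spec j n).
  - subst. unfold f. rewrite famdot_self. fold (fv n). pose proof (fv_pos n). field. nra.
  - unfold f. rewrite famdot_zero; [unfold Rdiv; ring|].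
    intros s t Hs Ht. destruct (Req_dec (xs j t) 0); auto. exfalso.
    apply (proj1 (proj2 (G_spec n))) in Ht; auto. apply bandb_true in Ht.
    apply n0. eapply band_unique; eauto.
Qed.

Lemma f_ext n u v : (forall t, u t = v t) -> f n u = f n v.
Proof. intros H. replace v with u; auto. extensionality t; auto. Qed.

Lemma f_lcomb n a m : f n (lcomb a xs m) = trl m a n.
Proof.
  induction m.
  - unfold trl. simpl. rewrite (f_ext n _ (fun t => 0 * xs 0%nat t + 0 * xs 0%nat t)) by (intros; simpl; ring).
    rewrite f_lin. ring.
  - rewrite (f_ext n _ (fun t => 1 * lcomb a xs m t + a m * xs m t)) by (intros; simpl; ring).
    rewrite f_lin, IHm, f_xs. unfold trl.
    destruct (Nat.eqb_spec m n); destruct (Nat.ltb_spec n m); destruct (Nat.ltb_spec n (S m)); try lia; subst; ring.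
Qed.

Fixpoint Gs (N : nat) : list (list nat) :=
  match N with O => nil | S k => Gs k ++ G k end.

Lemma Gs_props N : admissible_family (Gs N) /\
  (forall s t, In s (Gs N) -> In t s -> (height t < lo N)%nat).
Proof.
  induction N as [|N [[IH1 IH2] IH3]].
  - simpl. split; [apply adm_nil|]. intros s t [].
  - destruct (G_spec N) as [[HG1 HG2] [HG3 _]]. simpl. split; [split|].
    + intros s Hs. apply in_app_or in Hs as [Hs|Hs]; auto.
    + apply fop_app; auto. intros a b Ha Hb t Ht Ht'.
      apply (IH3 a t Ha) in Ht. apply (HG3 b t Hb) in Ht'. apply bandb_true in Ht'. lia.
    + intros s t Hs Ht. apply in_app_or in Hs as [Hs|Hs].
      * apply (IH3 s t Hs) in Ht. pose proof (lo_le_hb N). lia.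
      * apply (HG3 s t Hs) in Ht. apply bandb_true in Ht. lia.
Qed.

Lemma sumsq_f_bound y N : sumsq (fun k => f k y) N <= (2 / c^2) * fam_val y (Gs N).
Proof.
  induction N; cbn [sumsq Gs]. { simpl; lra. } rewrite fam_val_app. pose proof (f_sq N y). lra.
Qed.

Lemma sumsq_f_bound' y N : is_finite (jt_sq_norm y) ->
  sumsq (fun k => f k y) N <= (2 / c^2) * real (jt_sq_norm y).
Proof.
  intros Hf. eapply Rle_trans; [apply sumsq_f_bound|].
  apply Rmult_le_compat_l. { apply Rlt_le. unfold Rdiv. apply Rmult_lt_0_compat; [lra|]. apply Rinv_0_lt_compat. nra. }
  apply jt_le; auto. apply Gs_props.
Qed.

Lemma lcomb_real_bound a n : real (jt_sq_norm (lcomb a xs n)) <= C^2 * sumsq a n.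
Proof.
  destruct (Heq n a) as [_ H]. rewrite <- jt_norm_sq.
  pose proof (jt_norm_nonneg (lcomb a xs n)). pose proof (sqrt_pos (sumsq a n)).
  rewrite <- (pow2_sqrt (sumsq a n)) by apply sumsq_nonneg.
  replace (C ^ 2 * sqrt (sumsq a n) ^ 2) with ((C * sqrt (sumsq a n))^2) by ring.
  apply pow_incr. lra.
Qed.

Definition P (y : nat -> R) (t : nat) : R := lcomb (fun k => f k y) xs (S (height t)) t.

Lemma lcomb_big a t M : (S (height t) <= M)%nat -> lcomb a xs M t = lcomb a xs (S (height t)) t.
Proof. intros H. apply lcomb_stable; auto. intros k Hk. apply xs_zero_high. lia. Qed.

Lemma P_lin x y a b t : P (fun s => a * x s + b * y s) t = a * P x t + b * P y t.
Proof.
  unfold P. rewrite (lcomb_coef_ext _ (fun k => a * f k x + b * f k y)) by (intros; apply f_lin).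
  apply lcomb_lin.
Qed.

Definition K2 := C^2 * (2 / c^2).

Lemma K2_nonneg : 0 <= K2.
Proof. unfold K2. apply Rmult_le_pos. nra. apply Rlt_le. unfold Rdiv. apply Rmult_lt_0_compat; [lra|]. apply Rinv_0_lt_compat. nra. Qed.

Lemma P_fam y F : exists M, forall M', (M <= M')%nat -> fam_val (P y) F = fam_val (lcomb (fun k => f k y) xs M') F.
Proof.
  destruct (exists_height_bound F) as [M HM]. exists M. intros M' HM'.
  apply fam_val_ext. intros s t Hs Ht. specialize (HM s t Hs Ht). unfold P.
  symmetry. apply lcomb_big. lia.
Qed.

Lemma P_bound y : is_finite (jt_sq_norm y) ->
  is_finite (jt_sq_norm (P y)) /\ real (jt_sq_norm (P y)) <= K2 * real (jt_sq_norm y).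
Proof.
  intros Hf. apply jt_fin_bound. intros F HF.
  destruct (P_fam y F) as [M HM]. rewrite (HM M) by lia.
  eapply Rle_trans. apply jt_le; auto. apply lcomb_finite. apply xs_fin.
  eapply Rle_trans. apply lcomb_real_bound. unfold K2. rewrite Rmult_assoc.
  apply Rmult_le_compat_l. nra. apply sumsq_f_bound'; auto.
Qed.

Lemma P_norm y : is_finite (jt_sq_norm y) -> jt_norm (P y) <= sqrt K2 * jt_norm y.
Proof.
  intros Hf. destruct (P_bound y Hf) as [_ H]. unfold jt_norm.
  rewrite <- sqrt_mult_alt by apply K2_nonneg. apply sqrt_le_1_alt. auto.
Qed.

Lemma P_lcomb a n t : P (lcomb a xs n) t = lcomb a xs n t.
Proof.
  set (M := Nat.max n (S (height t))).
  unfold P. rewrite <- (lcomb_big _ t M) by lia.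
  rewrite (lcomb_coef_ext _ (trl n a)) by (intros; apply f_lcomb).
  rewrite lcomb_low. rewrite Nat.min_l by lia. reflexivity.
Qed.

Lemma P_JT y : in_JT y -> in_JT (P y).
Proof.
  intros [_ Hf]. destruct (P_bound y Hf) as [H _]. split; auto. apply finite_c0; auto.
Qed.

Lemma sqrt_lt_eps x eps : 0 <= x -> 0 < eps -> x < eps^2 -> sqrt x < eps.
Proof.
  intros H0 He H. rewrite <- (sqrt_pow2 eps) by lra. apply sqrt_lt_1_alt. lra.
Qed.

Lemma P_span y : in_JT y -> in_closed_span xs (P y).
Proof.
  intros Hy. split; [apply P_JT; auto|]. destruct Hy as [_ Hf].
  set (Sq := fun N => sumsq (fun k => f k y) N).
  set (E := fun r => exists N, r = Sq N).
  assert (HB : bound E).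
  { exists (2 / c^2 * real (jt_sq_norm y)). intros r [N ->]. apply sumsq_f_bound'; auto. }
  destruct (completeness E HB) as [L [HLub HLl]]. { exists (Sq 0%nat). exists 0%nat; auto. }
  intros eps Heps.
  set (eps2 := eps^2 / C^2).
  assert (He2 : 0 < eps2). { unfold eps2. apply Rdiv_lt_0_compat; nra. }
  assert (Hn : exists n, L - eps2 < Sq n).
  { apply NNPP. intros Hn. assert (L <= L - eps2); [|lra].
    apply HLl. intros r [N ->]. apply Rnot_lt_le. intros Hl. apply Hn. eauto. }
  destruct Hn as [n Hn].
  exists n, (fun k => f k y).
  assert (Hbd : forall F, admissible_family F ->
     fam_val (fun t => P y t - lcomb (fun k => f k y) xs n t) F <= C^2 * (L - Sq n)).
  { intros F HF. destruct (exists_height_bound F) as [M HM].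
    set (M' := Nat.max M n).
    rewrite (fam_val_ext _ (lcomb (trh n (fun k => f k y)) xs M')).
    2:{ intros s t Hs Ht. specialize (HM s t Hs Ht). unfold P.
        rewrite <- (lcomb_big _ t M') by lia. rewrite (lcomb_split _ _ n M' t).
        rewrite Nat.min_l by lia. ring. }
    eapply Rle_trans. apply jt_le; auto. apply lcomb_finite, xs_fin.
    eapply Rle_trans. apply lcomb_real_bound.
    apply Rmult_le_compat_l; [nra|].
    pose proof (sumsq_split (fun k => f k y) n M') as Hsp. rewrite Nat.min_l in Hsp by lia.
    assert (Sq M' <= L) by (apply HLub; exists M'; auto).
    unfold Sq in *. lra. }
  destruct (jt_fin_bound _ _ Hbd) as [_ Hr].
  unfold jt_norm. apply sqrt_lt_eps; auto. apply jt_real_nonneg.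
  eapply Rle_lt_trans; [exact Hr|].
  assert (C^2 * (L - Sq n) < C^2 * eps2). { apply Rmult_lt_compat_l; nra. }
  unfold eps2 in H. replace (C ^ 2 * (eps ^ 2 / C ^ 2)) with (eps^2) in H by (field; lra). lra.
Qed.

Lemma P_id y : in_closed_span xs y -> forall t, P y t = y t.
Proof.
  intros [[_ Hy] Happ] t.
  set (K := sqrt K2 + 1). assert (HK : 1 <= K) by (unfold K; pose proof (sqrt_pos K2); lra).
  assert (Hall : forall eps, 0 < eps -> Rabs (P y t - y t) <= K * eps).
  { intros eps Heps. destruct (Happ eps Heps) as [n [a Ha]].
    set (z := lcomb a xs n) in *.
    set (w := fun s => y s - z s) in *.
    assert (Hw : w = fun s => 1 * y s + (-1) * z s) by (extensionality s; unfold w; ring).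
    assert (Hzf : is_finite (jt_sq_norm z)) by (apply lcomb_finite, xs_fin).
    assert (Hwf : is_finite (jt_sq_norm w)) by (rewrite Hw; apply finite_comb; auto).
    assert (HPw : P w t = P y t - z t).
    { rewrite Hw, P_lin. unfold z. rewrite P_lcomb. ring. }
    assert (E1 : P y t - y t = P w t - w t) by (rewrite HPw; unfold w; ring).
    rewrite E1.
    pose proof (abs_le_norm (P w) t (proj1 (P_bound w Hwf))).
    pose proof (P_norm w Hwf). pose proof (abs_le_norm w t Hwf).
    pose proof (Rabs_triang (P w t) (- w t)). rewrite Rabs_Ropp in H2.
    pose proof (jt_norm_nonneg w). pose proof (sqrt_pos K2).
    unfold K. unfold Rminus. nra. }
  apply Rminus_diag_uniq. apply NNPP. intros Hne.
  assert (Hd : 0 < Rabs (P y t - y t)) by (apply Rabs_pos_lt; auto).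
  specialize (Hall (Rabs (P y t - y t) / (2 * K))).
  assert (0 < Rabs (P y t - y t) / (2 * K)) by (apply Rdiv_lt_0_compat; lra).
  specialize (Hall H).
  replace (K * (Rabs (P y t - y t) / (2 * K))) with (Rabs (P y t - y t) / 2) in Hall by (field; lra).
  lra.
Qed.

Lemma main_sec : complemented_in_JT (in_closed_span xs).
Proof.
  exists P, (sqrt K2). split; [|split; [|split; [|split]]].
  - apply P_JT.
  - intros; apply P_lin.
  - intros x [_ Hx]. apply P_norm; auto.
  - apply P_span.
  - apply P_id.
Qed.
End Main.

Theorem mainTheorem9 (xs : nat -> nat -> R) :
  (forall k, in_JT (xs k)) ->
  level_block xs ->
  equiv_l2_basis xs ->
  complemented_in_JT (in_closed_span xs).
Proof.
  intros Hjt Hlb [c [C [Hc [HC Heq]]]].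
  exact (main_sec xs Hjt Hlb c C Hc HC Heq).
Qed.
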